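(* For a fixed $x\in(0,1)$, the function $g(k)=(\cos kx+\sin kx)^{1/k}$ is decreasing on $(0,1)$. *)

(* Defs.v *)
From Stdlib Require Import Reals.
Open Scope R_scope.
Definition g (x k : R) : R := Rpower (cos (k * x) + sin (k * x)) (1 / k).

(* Main.v *)
Require Import Defs.
From Stdlib Require Import Reals Lra.
From Coquelicot Require Import Coquelicot.
Open Scope R_scope.

Lemma pos1sin u : 0 <= u <= 2 -> 0 < 1 + sin u.
Proof.
  intros H. pose proof PI2_1. assert (0 <= sin u) by (apply sin_ge_0; lra). lra.
Qed.

Definition Fz (u : R) := u * cos u / (1 + sin u) - ln (1 + sin u).

Lemma Fz_neg u : 0 < u <= 2 -> Fz u < 0.
Proof.
  intros Hu.
  destruct (MVT_cor2 Fz (fun c => - c / (1 + sin c)) 0 u) as [c [Hc Hc2]]; [lra| |].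
  - intros c Hc. apply is_derive_Reals.
    pose proof (pos1sin c ltac:(lra)).
    unfold Fz; auto_derive; [intuition lra|].
    assert (Hcs : cos c * cos c = 1 - sin c * sin c) by (pose proof (sin2_cos2 c); unfold Rsqr in *; lra).
    replace (c * cos c * (- (1 * cos c) * / ((1 + sin c) * (1 + sin c))))
      with (- c * (1 - sin c * sin c) / ((1+sin c)*(1+sin c))) by (rewrite <- Hcs; field; lra).
    field; lra.
  - unfold Fz at 2 in Hc. rewrite sin_0, cos_0, Rplus_0_r, ln_1 in Hc.
    pose proof (pos1sin c ltac:(lra)).
    assert (0 < c / (1 + sin c)) by (apply Rdiv_lt_0_compat; lra).
    unfold Rdiv in *. nra.
Qed.

Definition ff (u : R) := ln (1 + sin u) / u.

Lemma ff_decr a b : 0 < a -> a < b -> b <= 2 -> ff b < ff a.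
Proof.
  intros Ha Hab Hb.
  destruct (MVT_cor2 ff (fun c => Fz c / c ^ 2) a b) as [c [Hc Hc2]]; [lra| |].
  - intros c Hc. apply is_derive_Reals.
    pose proof (pos1sin c ltac:(lra)).
    unfold ff, Fz. auto_derive; [lra|]. field. lra.
  - pose proof (Fz_neg c ltac:(lra)).
    assert (Fz c / c ^ 2 < 0).
    { unfold Rdiv. apply Rmult_neg_pos; [lra|]. apply Rinv_0_lt_compat. nra. }
    nra.
Qed.

Lemma lnc t : 0 < t < 1 -> ln (cos t + sin t) = ff (2 * t) * t.
Proof.
  intros Ht. pose proof PI2_1.
  assert (0 < cos t) by (apply cos_gt_0; lra).
  assert (0 < sin t) by (apply sin_gt_0; lra).
  assert (E : 1 + sin (2 * t) = (cos t + sin t) * (cos t + sin t)).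
  { rewrite sin_2a. pose proof (sin2_cos2 t). unfold Rsqr in *. nra. }
  unfold ff. rewrite E, ln_mult by lra. field. lra.
Qed.

Theorem lemma4p13 (x : R) (hx0 : 0 < x) (hx1 : x < 1) :
  forall k1 k2 : R, 0 < k1 -> k1 < k2 -> k2 < 1 -> g x k2 < g x k1.
Proof.
  intros k1 k2 H1 H12 H2. unfold g, Rpower.
  apply exp_increasing.
  rewrite (lnc (k1 * x)) by (split; nra).
  rewrite (lnc (k2 * x)) by (split; nra).
  assert (ff (2 * (k2 * x)) < ff (2 * (k1 * x))) by (apply ff_decr; nra).
  replace (1 / k2 * (ff (2 * (k2 * x)) * (k2 * x))) with (ff (2 * (k2 * x)) * x) by (field; lra).
  replace (1 / k1 * (ff (2 * (k1 * x)) * (k1 * x))) with (ff (2 * (k1 * x)) * x) by (field; lra).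
  nra.
Qed.
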